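(* Let $f$ be a noisy process with noise variance $\sigma^2>0$ and assume $V:=\sup_{x\in\mathbb R}\mathbb E[(f^{\mathrm s}(x))^2]<\infty$. Then for every nonempty bounded collection of data sets $\tilde{\mathcal D}\subseteq\mathcal D$, $$1\le\sup_{D\in\tilde{\mathcal D}}\ \sup_{g\in\mathbb R^{\mathbb R}}\pi'_f(D)(g)\le 2\exp\Big(\frac{2\|\tilde{\mathcal D}\|_\infty^2V}{\sigma^2}+\frac{\|\tilde{\mathcal D}\|_\infty^3}{\sigma^2}\Big).$$
   Context: A stochastic process $f$ on $\mathbb R$ is noisy with noise variance $\sigma^2>0$ if $f=f^{\mathrm s}+f^{\mathrm n}$ with $f^{\mathrm s},f^{\mathrm n}$ independent, $f^{\mathrm s}$ (smooth part) having continuous sample paths, and $(f^{\mathrm n}(x_1),\dots,f^{\mathrm n}(x_n))\sim\mathcal N(\mathbf 0,\sigma^2\mathbf I_n)$ for pairwise distinct $x_i$. Data sets: $\mathcal D=\bigcup_{n\ge0}(\mathbb R\times\mathbb R)^n$; a data set $D=((x_i,y_i))_{i=1}^n$ is written $D=(\mathbf x,\mathbf y)$ with $\mathbf x,\mathbf y\in\mathbb R^n$ (the empty data set is allowed). For $D=(\mathbf x,\mathbf y)$ and $g:\mathbb R\to\mathbb R$ define $$\pi'_f(D)(g)=\frac{\mathcal N(\mathbf y\mid g(\mathbf x),\sigma^2\mathbf I)}{\mathbb E_{f^{\mathrm s}}[\mathcal N(\mathbf y\mid f^{\mathrm s}(\mathbf x),\sigma^2\mathbf I)]}$$ (with value $1$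 for $D=\varnothing$), where $g(\mathbf x)=(g(x_1),\dots,g(x_n))$ and $\mathcal N(\cdot\mid\mathbf m,\mathbf K)$ is the Gaussian density; this is the Radon–Nikodym derivative of the posterior of $f^{\mathrm s}$ given the noisy observations $D$ with respect to the prior law of $f^{\mathrm s}$. For $\tilde{\mathcal D}\subseteq\mathcal D$ let $\|\tilde{\mathcal D}\|_\infty=\sup_{(\mathbf x,\mathbf y)\in\tilde{\mathcal D}}\sum_{i=1}^{|\mathbf x|}(|y_i|\vee1)$; $\tilde{\mathcal D}$ is bounded if $\|\tilde{\mathcal D}\|_\infty<\infty$. *)

(* Defs.v *)
From HB Require Import structures.
From mathcomp Require Import all_boot all_order all_algebra.
From mathcomp Require Import all_classical all_reals all_analysis.
Set Implicit Arguments. Unset Strict Implicit. Unset Printing Implicit Defensive.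
Import Order.TTheory GRing.Theory Num.Theory.
Local Open Scope ring_scope.

Section Defs.
Context {R : realType}.

(* A data set D = ((x_i,y_i))_i is a finite sequence of pairs (x_i, y_i). *)

Definition gauss_dens (sigma : R) (D : seq (R * R)) (g : R -> R) : R :=
  \prod_(p <- D)
     ((Num.sqrt (2 * pi * sigma ^+ 2))^-1 *
      expR (- (p.2 - g p.1) ^+ 2 / (2 * sigma ^+ 2))).

Definition pi' {d} {Omega : measurableType d} (P : probability Omega R)
  (sigma : R) (fs : R -> Omega -> R) (D : seq (R * R)) (g : R -> R) : R :=
  gauss_dens sigma D g /
  fine (\int[P]_w (gauss_dens sigma D (fun x => fs x w))%:E)%E.

Definition Vsup {d} {Omega : measurableType d} (P : probability Omega R)
  (fs : R -> Omega -> R) : \bar R :=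
  ereal_sup [set (\int[P]_w ((fs x w) ^+ 2)%:E)%E | x in [set: R]].

Definition dnorm (Dt : set (seq (R * R))) : \bar R :=
  ereal_sup [set (\sum_(p <- D) Num.max `|p.2| 1)%:E | D in Dt].

Definition sup_pi' {d} {Omega : measurableType d} (P : probability Omega R)
  (sigma : R) (fs : R -> Omega -> R) (Dt : set (seq (R * R))) : \bar R :=
  ereal_sup [set (pi' P sigma fs D g)%:E | D in Dt & g in [set: R -> R]].

End Defs.

(* Main.v *)
Require Import Defs.
From HB Require Import structures.
From mathcomp Require Import all_boot all_order all_algebra.
From mathcomp Require Import all_classical all_reals all_analysis.
From mathcomp Require Import measurable_realfun.
From mathcomp Require Import ring lra.
Import Order.TTheory GRing.Theory Num.Theory numFieldNormedType.Exports.
Local Open Scope ring_scope.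

Section Aux.
Context (R : realType) (d : measure_display) (Omega : measurableType d)
  (P : probability Omega R) (fs : R -> Omega -> R) (sigma : R).
Hypothesis sig0 : 0 < sigma.
Hypothesis mfs : forall x, measurable_fun [set: Omega] (fs x).

Let c : R := (Num.sqrt (2 * pi * sigma ^+ 2))^-1.
Let qf (p : R * R) (g : R -> R) : R := (p.2 - g p.1) ^+ 2 / (2 * sigma ^+ 2).
Let Q (D : seq (R * R)) (g : R -> R) : R := \sum_(p <- D) qf p g.

Lemma c_gt0 : 0 < c.
Proof.
rewrite /c invr_gt0 sqrtr_gt0 mulr_gt0 ?exprn_gt0 // mulr_gt0 ?pi_gt0 //.
Qed.

Lemma c_ge0 : 0 <= c. Proof. exact: ltW c_gt0. Qed.

Lemma qf_ge0 p g : 0 <= qf p g.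
Proof. by rewrite /qf divr_ge0 ?sqr_ge0 // mulr_ge0 ?sqr_ge0. Qed.

Lemma Q_ge0 D g : 0 <= Q D g.
Proof. by rewrite /Q sumr_ge0 // => p _; apply: qf_ge0. Qed.

Lemma dens_eq D g : gauss_dens sigma D g = c ^+ size D * expR (- Q D g).
Proof.
rewrite /gauss_dens /Q; elim: D => [|p D IH].
  by rewrite !big_nil oppr0 expR0 mulr1.
rewrite !big_cons IH /= [c ^+ _.+1]exprS opprD expRD -/c /qf mulNr.
by rewrite mulrACA.
Qed.

Lemma dens_le D g : gauss_dens sigma D g <= c ^+ size D.
Proof.
rewrite dens_eq -[leRHS]mulr1 ler_wpM2l ?exprn_ge0 ?c_ge0 //.
by rewrite expR_le1 oppr_le0 Q_ge0.
Qed.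

Lemma dens_ge0 D g : 0 <= gauss_dens sigma D g.
Proof.
by rewrite dens_eq mulr_ge0 ?exprn_ge0 ?c_ge0 ?expR_gt0.
Qed.

Lemma mqf p : measurable_fun [set: Omega] (fun w => qf p (fun x => fs x w)).
Proof.
rewrite /qf; apply: measurable_funM; last exact: measurable_cst.
apply: measurable_funX; apply: measurable_funB => //; exact: measurable_cst.
Qed.

Lemma mQ D : measurable_fun [set: Omega] (fun w => Q D (fun x => fs x w)).
Proof. by apply: measurable_sum => p; apply: mqf. Qed.

Lemma mdens D : measurable_fun [set: Omega]
  (fun w => gauss_dens sigma D (fun x => fs x w)).
Proof.
rewrite (_ : (fun w => _) = (fun w => c ^+ size D * expR (- Q D (fun x => fs x w)))); last first.
  by apply/funext => w; rewrite dens_eq.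
apply: measurable_funM; first exact: measurable_cst.
apply: (measurableT_comp (f := expR)); first exact: measurable_expR.
exact: measurable_funN (mQ D).
Qed.


Let E D := (\int[P]_w (gauss_dens sigma D (fun x => fs x w))%:E)%E.

Lemma mdensE D : measurable_fun [set: Omega]
  (fun w => (gauss_dens sigma D (fun x => fs x w))%:E).
Proof. by apply/measurable_EFinP; apply: mdens. Qed.

Lemma E_ge0 D : (0 <= E D)%E.
Proof. by apply: integral_ge0 => w _; rewrite lee_fin dens_ge0. Qed.

Lemma E_le D : (E D <= (c ^+ size D)%:E)%E.
Proof.
rewrite -[X in (_ <= X)%E]mule1 -(probability_setT P) -integral_cst //.
apply: ge0_le_integral => //.
- by move=> w _; rewrite lee_fin dens_ge0.
- exact: mdensE.
- by move=> w _; rewrite lee_fin dens_le.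
Qed.

Lemma E_fin D : E D \is a fin_num.
Proof.
rewrite ge0_fin_numE ?E_ge0 //; apply: le_lt_trans (E_le D) _; exact: ltry.
Qed.

Lemma tangent (t M : R) : expR (- M) * (1 + M - t) <= expR (- t).
Proof.
have -> : expR (- t) = expR (- M) * expR (M - t).
  by rewrite -expRD addrA addNr add0r.
rewrite ler_wpM2l ?(ltW (expR_gt0 _)) //.
by rewrite -addrA expR_ge1Dx.
Qed.


Lemma E_lb D M :
  (\int[P]_w (Q D (fun x => fs x w))%:E <= M%:E)%E ->
  ((c ^+ size D * expR (- M))%:E <= E D)%E.
Proof.
move=> hI.
have I0 : (0 <= \int[P]_w (Q D (fun x => fs x w))%:E)%E.
  by apply: integral_ge0 => w _; rewrite lee_fin Q_ge0.
have M0 : 0 <= M by rewrite -lee_fin (le_trans I0 hI).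
set a := c ^+ size D * expR (- M).
have a0 : 0 <= a by rewrite mulr_ge0 ?exprn_ge0 ?c_ge0 // ltW ?expR_gt0.
have mQE : measurable_fun [set: Omega] (fun w => (Q D (fun x => fs x w))%:E).
  by apply/measurable_EFinP; apply: mQ.
have H1 : ((a * (1 + M))%:E <=
   \int[P]_w ((gauss_dens sigma D (fun x => fs x w))%:E +
               a%:E * (Q D (fun x => fs x w))%:E))%E.
  rewrite -[X in (X <= _)%E]mule1 -(probability_setT P) -integral_cst //.
  apply: ge0_le_integral => //.
  - by move=> w _; rewrite lee_fin mulr_ge0 // addr_ge0.
  - apply: emeasurable_funD; first exact: mdensE.
    exact: measurable_funeM.
  - move=> w _; rewrite /= -EFinM -EFinD lee_fin dens_eq.
    have T := tangent (Q D (fun x => fs x w)) M.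
    have cn0 : 0 <= c ^+ size D by rewrite exprn_ge0 ?c_ge0.
    have := ler_wpM2l cn0 T; rewrite /a.
    set u := c ^+ size D; set v := expR (- M); set q := Q D _; set z := expR (- q).
    move=> h; nra.
move: H1; rewrite ge0_integralD //; last 4 first.
- by move=> w _; rewrite lee_fin dens_ge0.
- exact: mdensE.
- by move=> w _; rewrite mule_ge0 // lee_fin Q_ge0.
- exact: measurable_funeM.
rewrite ge0_integralZl //; last by move=> w _; rewrite lee_fin Q_ge0.
rewrite -/(E D) => H1.
have If : (\int[P]_w (Q D (fun x => fs x w))%:E)%E \is a fin_num.
  by rewrite ge0_fin_numE // (le_lt_trans hI) ?ltry.
have Ef := E_fin D.
move: H1 hI I0 If Ef.
move: (\int[P]_w (Q D (fun x => fs x w))%:E)%E (E D) => I e h1 h2 h3 If Ef.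
rewrite -(fineK If) -(fineK Ef) in h1 h2 h3 *.
move: h1 h2 h3; rewrite -EFinM -EFinD !lee_fin => h1 h2 h3.
nra.
Qed.

Lemma I_ub D (Vr : R) :
  (forall x, (\int[P]_w (fs x w ^+ 2)%:E <= Vr%:E)%E) ->
  (\int[P]_w (Q D (fun x => fs x w))%:E <=
    (\sum_(p <- D) (p.2 ^+ 2 + Vr) / sigma ^+ 2)%:E)%E.
Proof.
move=> hV.
have s20 : 0 < sigma ^+ 2 by rewrite exprn_gt0.
rewrite /Q.
under eq_integral do rewrite -sumEFin.
rewrite ge0_integral_sum //; last 2 first.
- by move=> p; apply/measurable_EFinP; apply: mqf.
- by move=> p w _; rewrite lee_fin qf_ge0.
rewrite -sumEFin; apply: lee_sum => p _.
have mf2 : measurable_fun [set: Omega] (fun w => (fs p.1 w ^+ 2)%:E).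
  by apply/measurable_EFinP; apply: measurable_funX.
apply: (@le_trans _ _ (\int[P]_w ((p.2 ^+ 2 / sigma ^+ 2)%:E +
          (sigma ^+ 2)^-1%:E * (fs p.1 w ^+ 2)%:E))%E).
  apply: ge0_le_integral => //.
  - by move=> w _; rewrite lee_fin qf_ge0.
  - by apply/measurable_EFinP; apply: mqf.
  - by apply: emeasurable_funD => //; apply: measurable_funeM.
  - move=> w _; rewrite -EFinM -EFinD lee_fin /qf.
    set y := p.2; set f := fs p.1 w.
    have -> : y ^+ 2 / sigma ^+ 2 + (sigma ^+ 2)^-1 * f ^+ 2 =
              (2 * y ^+ 2 + 2 * f ^+ 2) / (2 * sigma ^+ 2).
      by field; rewrite gt_eqF.
    rewrite ler_wpM2r ?invr_ge0 ?mulr_ge0 ?exprn_ge0 ?(ltW sig0) //.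
    have := sqr_ge0 (y + f); nra.
rewrite ge0_integralD //;
  try (by move=> w _; rewrite lee_fin divr_ge0 ?sqr_ge0 ?(ltW s20));
  try (by move=> w _; rewrite mule_ge0 // lee_fin ?invr_ge0 ?sqr_ge0 ?(ltW s20));
  try exact: measurable_funeM.
rewrite integral_cst //. set PT := (_ [set: Omega]%classic). have -> : PT = 1%E by exact: probability_setT. rewrite mule1.
rewrite ge0_integralZl //; try (by move=> w _; rewrite lee_fin sqr_ge0); try (by rewrite lee_fin invr_ge0 exprn_ge0 // ltW).
have h := hV p.1.
have h0 : (0 <= \int[P]_w (fs p.1 w ^+ 2)%:E)%E.
  by apply: integral_ge0 => w _; rewrite lee_fin sqr_ge0.
have If : (\int[P]_w (fs p.1 w ^+ 2)%:E)%E \is a fin_num.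
  by rewrite ge0_fin_numE // (le_lt_trans h) ?ltry.
move: h h0 If; move: (\int[P]_w (fs p.1 w ^+ 2)%:E)%E => I h h0 If.
rewrite -(fineK If) in h h0 *.
rewrite -EFinM -EFinD lee_fin; rewrite lee_fin in h.
rewrite mulrDl lerD2l mulrC ler_wpM2r // invr_ge0 ltW //.
Qed.

Lemma pi'_ub D g M :
  (\int[P]_w (Q D (fun x => fs x w))%:E <= M%:E)%E ->
  pi' P sigma fs D g <= expR M.
Proof.
move=> hI.
have lb := E_lb D M hI.
have Ef := E_fin D.
rewrite /pi' -/(E D).
rewrite -(fineK Ef) lee_fin in lb.
set e := fine (E D) in lb *.
have cn : 0 < c ^+ size D by rewrite exprn_gt0 ?c_gt0.
have e0 : 0 < e by apply: lt_le_trans lb; rewrite mulr_gt0 ?expR_gt0.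
rewrite ler_pdivrMr //.
apply: le_trans (dens_le D g) _.
have -> : c ^+ size D = expR M * (c ^+ size D * expR (- M)).
  by rewrite mulrCA -expRD subrr expR0 mulr1.
by rewrite ler_wpM2l // ltW ?expR_gt0.
Qed.

Lemma pi'_lb D M s :
  (\int[P]_w (Q D (fun x => fs x w))%:E <= M%:E)%E ->
  (forall w, pi' P sigma fs D (fun x => fs x w) <= s) -> 1 <= s.
Proof.
move=> hI hs.
have lb := E_lb D M hI.
have Ef := E_fin D.
have hle : (E D <= \int[P]_w (cst (s * fine (E D))%:E w))%E.
  apply: ge0_le_integral => //.
  - by move=> w _; rewrite lee_fin dens_ge0.
  - exact: mdensE.
  - move=> w _; rewrite lee_fin /=.
    have cn : 0 < c ^+ size D by rewrite exprn_gt0 ?c_gt0.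
    have := hs w; rewrite /pi' -/(E D).
    have e0 : 0 < fine (E D).
      rewrite -lte_fin fineK //; apply: lt_le_trans lb.
      by rewrite lte_fin mulr_gt0 ?expR_gt0.
    by rewrite ler_pdivrMr.
move: hle; rewrite integral_cst //.
set PT := (_ [set: Omega]%classic).
have -> : PT = 1%E by exact: probability_setT.
rewrite mule1.
rewrite -(fineK Ef) lee_fin in lb *.
set e := fine (E D) in lb *.
have e0 : 0 < e by apply: lt_le_trans lb; rewrite mulr_gt0 ?expR_gt0 ?exprn_gt0 ?c_gt0.
move=> h; rewrite -(ler_pM2r e0) mul1r //.
Qed.

End Aux.

Lemma arith (R : realType) (D : seq (R * R)) (Vr N : R) :
  0 <= Vr -> \sum_(p <- D) Num.max `|p.2| 1 <= N ->
  \sum_(p <- D) (p.2 ^+ 2 + Vr) <= 2 * N ^+ 2 * Vr + N ^+ 3.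
Proof.
move=> V0 hN.
have key : forall D : seq (R * R),
  \sum_(p <- D) (p.2 ^+ 2 + Vr) <=
   (\sum_(p <- D) Num.max `|p.2| 1) ^+ 2 + (\sum_(p <- D) Num.max `|p.2| 1) * Vr
  /\ 0 <= \sum_(p <- D) Num.max `|p.2| 1.
  elim=> [|p D' [IH S0]]; first by rewrite !big_nil expr0n /= mul0r addr0.
  rewrite !big_cons.
  set S := \sum_(p <- D') _ in IH S0 *.
  set m := Num.max `|p.2| 1.
  have hm : `|p.2| <= m by rewrite /m le_max lexx.
  have m1 : 1 <= m by rewrite /m le_max lexx orbT.
  move: hm; rewrite ler_norml => /andP [h1 h2].
  split; last by rewrite addr_ge0 // (le_trans _ m1).
  have y2 : p.2 ^+ 2 <= m ^+ 2 by nra.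
  nra.
have [k S0] := key D.
set T := \sum_(p <- D) _ in hN k S0.
have T01 : T = 0 \/ 1 <= T.
  rewrite /T; case: D {k S0 hN T} => [|p D]; first by left; rewrite big_nil.
  right; rewrite big_cons.
  have m1 : 1 <= Num.max `|p.2| 1 by rewrite le_max lexx orbT.
  have : 0 <= \sum_(q <- D) Num.max `|q.2| 1.
    by rewrite sumr_ge0 // => q _; rewrite le_max ler01 orbT.
  lra.
have N0 : 0 <= N by lra.
case: T01 => hT.
  rewrite hT in k; move: k; rewrite expr0n /= mul0r addr0 => k.
  apply: le_trans k _.
  by rewrite addr_ge0 ?exprn_ge0 // !mulr_ge0 ?exprn_ge0.
have N1 : 1 <= N by lra.
apply: le_trans k _.
have h1 : T ^+ 2 <= N ^+ 2 by rewrite lerXn2r // ?nnegrE; lra.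
have h2 : N ^+ 2 <= N ^+ 3 by rewrite [N ^+ 3]exprS -[leLHS]mul1r ler_wpM2r ?exprn_ge0.
have h3 : T * Vr <= N ^+ 2 * Vr.
  rewrite ler_wpM2r //; apply: (le_trans hN).
  by rewrite expr2 -[leLHS]mul1r ler_wpM2r.
have h4 : 0 <= N ^+ 2 * Vr by rewrite mulr_ge0 ?exprn_ge0.
lra.
Qed.



Theorem mainTheorem8 (R : realType) (d : measure_display)
  (Omega : measurableType d) (P : probability Omega R)
  (fs : R -> Omega -> R) (sigma : R) (Dt : set (seq (R * R))) :
  0 < sigma ->
  (forall x, measurable_fun [set: Omega] (fs x)) ->
  (forall w : Omega, continuous (fun x : R => fs x w)) ->
  (Vsup P fs < +oo)%E ->
  (Dt !=set0)%classic ->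
  (dnorm Dt < +oo)%E ->
  (1 <= sup_pi' P sigma fs Dt)%E /\
  (sup_pi' P sigma fs Dt <=
     (2 * expR (2 * (fine (dnorm Dt)) ^+ 2 * fine (Vsup P fs) / sigma ^+ 2
                + (fine (dnorm Dt)) ^+ 3 / sigma ^+ 2))%:E)%E.
Proof.
move=> sig0 mfs _ hV [D0 hD0] hN.
have hVx : forall x, (\int[P]_w (fs x w ^+ 2)%:E <= Vsup P fs)%E.
  by move=> x; apply: ereal_sup_ubound; exists x.
have V0 : (0 <= Vsup P fs)%E.
  apply: le_trans (hVx 0); apply: integral_ge0 => w _; rewrite lee_fin sqr_ge0 //.
have Vf : Vsup P fs \is a fin_num by rewrite (ge0_fin_numE V0).
set Vr := fine (Vsup P fs).
have hV' : forall x, (\int[P]_w (fs x w ^+ 2)%:E <= Vr%:E)%E.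
  by move=> x; rewrite /Vr fineK.
have Vr0 : 0 <= Vr by rewrite -lee_fin /Vr fineK.
have hDx : forall D, Dt D -> ((\sum_(p <- D) Num.max `|p.2| 1)%:E <= dnorm Dt)%E.
  by move=> D hD; apply: ereal_sup_ubound; exists D.
have N0 : (0 <= dnorm Dt)%E.
  apply: le_trans (hDx D0 hD0); rewrite lee_fin sumr_ge0 // => q _.
have Nf : dnorm Dt \is a fin_num by rewrite (ge0_fin_numE N0).
set N := fine (dnorm Dt).
have hDN : forall D, Dt D -> \sum_(p <- D) Num.max `|p.2| 1 <= N.
  by move=> D hD; rewrite -lee_fin /N fineK // hDx.
set B := 2 * N ^+ 2 * Vr / sigma ^+ 2 + N ^+ 3 / sigma ^+ 2.
have MB : forall D, Dt D -> \sum_(p <- D) (p.2 ^+ 2 + Vr) / sigma ^+ 2 <= B.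
  move=> D hD; rewrite -mulr_suml /B -mulrDl ler_wpM2r ?invr_ge0 ?exprn_ge0 ?(ltW sig0) //.
  by apply: arith => //; exact: hDN.
split.
- have ub : forall w, ((pi' P sigma fs D0 (fun x => fs x w))%:E <= sup_pi' P sigma fs Dt)%E.
    move=> w; apply: ereal_sup_ubound; exists D0 => //; exists (fun x => fs x w) => //.
  have [w0 _] : exists w : Omega, True.
    apply: contrapT => nw.
    have : [set: Omega]%classic = set0.
      by apply/seteqP; split => // w _; apply: nw; exists w.
    move=> e; have := probability_setT P; rewrite e measure0 => -[] /eqP.
    by rewrite eq_sym oner_eq0.
  move: ub; case: (sup_pi' P sigma fs Dt) => [s| |] ub.
  + rewrite lee_fin; apply: (pi'_lb _ _ _ _ _ _ sig0 mfs D0 _ s (I_ub _ _ _ _ _ _ sig0 mfs D0 Vr hV')) => w.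
    by rewrite -lee_fin; exact: ub w.
  + by rewrite leey.
  + by have := ub w0; rewrite leeNy_eq.
- apply: ge_ereal_sup => z [D hD [g _ <-]].
  rewrite lee_fin; apply: le_trans (pi'_ub _ _ _ _ _ _ sig0 mfs D g _ (I_ub _ _ _ _ _ _ sig0 mfs D Vr hV')) _.
  apply: (@le_trans _ _ (expR B)); first by rewrite ler_expR MB.
  by rewrite -[leLHS]mul1r ler_wpM2r ?(ltW (expR_gt0 _)) // ler1n.
Qed.
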